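(* Let $\mathcal{E}$ be a set of entities and $\mathcal{R}$ a set of relations, and let a triple be an element of $\mathcal{E}\times\mathcal{R}\times\mathcal{E}$. Fix a test set $\mathcal{T}_{test}$ of triples and an evaluation assumption WA $\in\{\text{CWA},\text{RS-POWA}\}$, which determines a set $N_{WA}$ of triples disjoint from $\mathcal{T}_{test}$ (described in the context). Let $\mathcal{T}^1_{predict}$ be a finite set of predicted triples, each carrying a real score, and let $\mathcal{T}^2_{predict}=\mathcal{T}^1_{predict}\cup\{(h,r,t)\}$, where $(h,r,t)\notin\mathcal{T}^1_{predict}$ is a triple with a score and the triples of $\mathcal{T}^1_{predict}$ keep their scores. If $(h,r,t)\in\mathcal{T}_{test}$ (i.e. $(h,r,t)$ is in the positive set $\mathcal{T}^{WA+}_{predict}=\mathcal{T}^2_{predict}\cap\mathcal{T}_{test}$), then $RS^2_{TSP}>RS^1_{TSP}$, where $RS^k_{TSP}$ denotes the ranking score of $\mathcal{T}^k_{predict}$.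
   Context: Ranking score: given a finite predicted set $\mathcal{T}_{predict}$ with scores, sort it in descending order of score (with a fixed tie-breaking, consistent when a triple is added, so that the relative order of the original triples is unchanged) to obtain the list $tri_1,tri_2,\dots$ with positions $i\ge 1$. Define $\mathcal{T}^{WA+}_{predict}=\mathcal{T}_{predict}\cap\mathcal{T}_{test}$, $\mathcal{T}^{WA-}_{predict}=\mathcal{T}_{predict}\cap N_{WA}$, $\mathcal{T}^{WA}_{predict}=\mathcal{T}^{WA+}_{predict}\cup\mathcal{T}^{WA-}_{predict}$. Set $rs_{tri_i}=1/i$ if $tri_i\in\mathcal{T}^{WA+}_{predict}$ and $rs_{tri_i}=-1/i$ if $tri_i\in\mathcal{T}^{WA-}_{predict}$, and $RS_{TSP}=\sum_{tri_i\in\mathcal{T}^{WA}_{predict}} rs_{tri_i}$ (triples in neither set occupy positions but contribute nothing). Under the closed-world assumption (CWA), $N_{CWA}$ is the set of all triples not in $\mathcal{T}_{test}$. Under the relation-similarity partial-open-world assumption (RS-POWA), given a known triple set $\mathcal{T}$ (training triples) and a similarity $sim(r,r')=\max\big(|P_r\cap P_{r'}|/|P_r|,\ |P_r\cap P_{r'}|/|P_{r'}|\big)$, where $P_r$ is the set of entity pairs linked by $r$ in the training and test triples, and threshold $\theta$ (e.g. $0.8$), $N_{RS\text{-}POWA}$ is the set of triples $(h,r,t)\notin\mathcal{T}_{test}$ for which some relation $r'\neq r$ with $(h,r',t)$ a known triple satisfies $sim(r,r')<\theta$. *)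

(* Defs.v *)
From mathcomp Require Import all_boot all_order all_algebra.
Set Implicit Arguments. Unset Strict Implicit. Unset Printing Implicit Defensive.
Import Order.TTheory GRing.Theory Num.Theory.
Local Open Scope ring_scope.

Definition triple (E Rel : finType) : finType := (E * Rel * E)%type.

Section KG.
Variables (R : realFieldType) (E Rel : finType).
Local Notation T := (triple E Rel).

Inductive assumption := CWA | RSPOWA.

Definition pairs_of (train test : {set T}) (r : Rel) : {set E * E} :=
  [set p : E * E | ((p.1, r, p.2) \in train) || ((p.1, r, p.2) \in test)].

Definition sim (train test : {set T}) (r r' : Rel) : R :=
  let P := pairs_of train test r in
  let P' := pairs_of train test r' in
  Num.max (#|P :&: P'|%:R / #|P|%:R) (#|P :&: P'|%:R / #|P'|%:R).

Definition N_CWA (test : {set T}) : {set T} := [set x | x \notin test].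

Definition N_RSPOWA (train test : {set T}) (theta : R) : {set T} :=
  [set x : T | (x \notin test) &&
     [exists r' : Rel, (r' != x.1.2) && ((x.1.1, r', x.2) \in train)
                       && (sim train test x.1.2 r' < theta)]].

Definition N_WA (wa : assumption) (train test : {set T}) (theta : R) : {set T} :=
  match wa with
  | CWA => N_CWA test
  | RSPOWA => N_RSPOWA train test theta
  end.

Definition rank_le (s : T -> R) (tb : rel T) : rel T :=
  fun x y => (s y < s x) || ((s x == s y) && tb x y).

Definition ranked (s : T -> R) (tb : rel T) (P : {set T}) : seq T :=
  sort (rank_le s tb) (enum P).

Definition rs_sign (test N : {set T}) (x : T) : R :=
  if x \in test then 1 else if x \in N then -1 else 0.

Definition RS_TSP (test N : {set T}) (s : T -> R) (tb : rel T) (P : {set T}) : R :=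
  let l := ranked s tb P in
  \sum_(p <- zip l (iota 1 (size l))) rs_sign test N p.1 / (p.2)%:R.

End KG.

(* Main.v *)
Require Import Defs.
From mathcomp Require Import all_boot all_order all_algebra.
From mathcomp Require Import ring lra.
Import Order.TTheory GRing.Theory Num.Theory.
Local Open Scope ring_scope.

Section Aux.
Variables (R : realFieldType) (E Rel : finType).
Local Notation T := (triple E Rel).
Variables (test N : {set T}).

Fixpoint g (l : seq T) (n : nat) : R :=
  match l with [::] => 0 | y :: l' => rs_sign R test N y / n%:R + g l' n.+1 end.

Lemma gE l n : \sum_(p <- zip l (iota n (size l))) rs_sign R test N p.1 / (p.2)%:R = g l n.
Proof. by elim: l n => [|y l IH] n /=; rewrite ?big_nil // big_cons IH. Qed.

Lemma g_cat a b n : g (a ++ b) n = g a n + g b (n + size a).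
Proof.
elim: a n => [|y a IH] n /=; first by rewrite add0r addn0.
by rewrite IH addrA addnS.
Qed.

Lemma d_lt b m : (0 < m)%N -> g b m - g b m.+1 < 1 / m%:R.
Proof.
elim: b m => [|y b IH] m m0 /=.
  by rewrite subrr divr_gt0 // ltr0n.
have := IH m.+1 isT => /= H.
have hu : 0 < m.+1%:R^-1 :> R by rewrite invr_gt0 ltr0n.
have huv : m.+1%:R^-1 <= m%:R^-1 :> R.
  by rewrite lef_pV2 ?posrE ?ltr0n // ler_nat.
move: H; rewrite !mul1r.
rewrite /rs_sign; case: ifP => _; [|case: ifP => _]; rewrite ?mul1r ?mulN1r ?mul0r;
  move: hu huv; move: (m%:R^-1) (m.+1%:R^-1) (g b m.+1) (g b m.+2) => u v g1 g2; lra.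
Qed.
End Aux.

Theorem theorem1 (R : realFieldType) (E Rel : finType)
    (train test : {set triple E Rel}) (theta : R) (wa : assumption)
    (s : triple E Rel -> R) (tb : rel (triple E Rel))
    (tb_total : total tb) (tb_trans : transitive tb)
    (tb_anti : antisymmetric tb)
    (P1 : {set triple E Rel}) (x : triple E Rel) :
  x \notin P1 -> x \in test ->
  RS_TSP test (N_WA wa train test theta) s tb P1 <
  RS_TSP test (N_WA wa train test theta) s tb (x |: P1).
Proof.
move=> xP xt.
set N := N_WA _ _ _ _.
set le := rank_le s tb.
have le_tot : total le.
  move=> u v; rewrite /le /rank_le.
  case: (ltgtP (s u) (s v)) => h //=; rewrite ?orbF /=; apply: tb_total.
have le_tr : transitive le.
  move=> v u w; rewrite /le /rank_le.
  case/orP=> [h1|/andP[/eqP h1 t1]]; case/orP=> [h2|/andP[/eqP h2 t2]].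
  - by rewrite (lt_trans h2 h1).
  - by rewrite -h2 h1.
  - by rewrite h1 h2.
  - by rewrite h1 h2 eqxx (tb_trans _ _ _ t1 t2) orbT.
have le_anti : antisymmetric le.
  move=> u v; rewrite /le /rank_le.
  case/andP; case/orP=> [h1|/andP[/eqP h1 t1]]; case/orP=> [h2|/andP[/eqP h2 t2]].
  - by move: (lt_trans h1 h2); rewrite ltxx.
  - by move: h1; rewrite h2 ltxx.
  - by move: h2; rewrite h1 ltxx.
  - by apply: tb_anti; rewrite t1 t2.
rewrite /RS_TSP /ranked -/le.
set l1 := sort le (enum P1).
set l2 := sort le (enum (x |: P1)).
rewrite !gE.
pose p := fun y => le y x.
set a := filter p l1.
set b := filter (predC p) l1.
have sl1 : sorted le l1 by apply: sort_sorted.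
have pl1 : pairwise le l1 by rewrite -(sorted_pairwise le_tr).
have pa : pairwise le a by apply: pairwise_filter.
have pb : pairwise le b by apply: pairwise_filter.
have ab : allrel le a b.
  apply/allrelP => u v; rewrite !mem_filter /p /= => /andP[hu _] /andP[hv _].
  have : le x v by case/orP: (le_tot x v) => // h; rewrite h in hv.
  exact: le_tr.
have e1 : l1 = a ++ b.
  apply: (sorted_eq le_tr le_anti sl1).
    by rewrite (sorted_pairwise le_tr) pairwise_cat ab pa pb.
  by rewrite perm_sym perm_filterC.
have e2 : l2 = a ++ x :: b.
  apply: (sorted_eq le_tr le_anti (sort_sorted le_tot _)).
    rewrite (sorted_pairwise le_tr) pairwise_cat pa /= pb andbT.
    rewrite allrel_consr ab andbT.
    apply/andP; split.
      by apply/allP => u; rewrite mem_filter => /andP[].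
    apply/allP => v; rewrite mem_filter /p /= => /andP[hv _].
    by case/orP: (le_tot x v) => // h; rewrite h in hv.
  rewrite perm_sort perm_sym -cat1s perm_catCA /= -e1.
  apply: (perm_trans (y := x :: enum P1)); first by rewrite perm_cons perm_sort.
  apply: uniq_perm.
  - by rewrite /= mem_enum xP enum_uniq.
  - exact: enum_uniq.
  - by move=> u; rewrite mem_enum in_setU1 inE mem_enum.
rewrite e1 e2 !g_cat /=.
have := @d_lt R E Rel test N b _ (isT : (0 < (1 + size a).+1)%N).
have := @d_lt R E Rel test N b _ (isT : (0 < 1 + size a)%N).
rewrite /rs_sign xt mul1r. lra.
Qed.
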